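(* There are infinitely many polynomials $f\in\mathbb Z[x]$, each irreducible over $\mathbb Q$, which factorise over $\mathbb C$ as $f=(x-\alpha)(x-\overline{\alpha})(x-\alpha^{-1})(x-\overline{\alpha}^{-1})$ with $\alpha=\lambda e^{2\pi i\theta}$, where $\lambda\in\mathbb R$, $\lambda>1$, and $\theta\in(0,1/2)$ is irrational. *)

(* Defs.v *)
From Stdlib Require Import Reals ZArith.
From HB Require Import structures.
From mathcomp Require Import all_boot all_order all_algebra.

Set Implicit Arguments.
Unset Strict Implicit.
Unset Printing Implicit Defensive.

Definition Cplx : Type := (R * R)%type.
Definition Cof (r : R) : Cplx := (r, R0).
Definition Cadd (z w : Cplx) : Cplx := (Rplus z.1 w.1, Rplus z.2 w.2).
Definition Csub (z w : Cplx) : Cplx := (Rminus z.1 w.1, Rminus z.2 w.2).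
Definition Cmul (z w : Cplx) : Cplx :=
  (Rminus (Rmult z.1 w.1) (Rmult z.2 w.2), Rplus (Rmult z.1 w.2) (Rmult z.2 w.1)).
Definition Cconj (z : Cplx) : Cplx := (z.1, Ropp z.2).
Definition Cnorm2 (z : Cplx) : R := Rplus (Rmult z.1 z.1) (Rmult z.2 z.2).
Definition Cinv (z : Cplx) : Cplx :=
  (Rdiv z.1 (Cnorm2 z), Rdiv (Ropp z.2) (Cnorm2 z)).
Definition Cexp2pii (theta : R) : Cplx :=
  (cos (Rmult (Rmult (IZR (Zpos 2)) PI) theta), sin (Rmult (Rmult 2 PI) theta)).

Definition int_to_R (a : int) : R :=
  match a with
  | Posz n => INR n
  | Negz n => Ropp (INR n.+1)
  end.

Definition Ceval (f : {poly int}) (z : Cplx) : Cplx :=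
  foldr (fun a acc => Cadd (Cof (int_to_R a)) (Cmul z acc)) (Cof R0) (polyseq f).

Definition irrational (x : R) : Prop :=
  ~ exists (p q : Z), q <> Z0 /\ x = Rdiv (IZR p) (IZR q).

Definition irreducible_over_Q (f : {poly int}) : Prop :=
  irreducible_poly (map_poly (intr : int -> rat) f).

(* f = (x - a)(x - conj a)(x - a^-1)(x - conj(a)^-1) as polynomials over C,
   stated as equality of the polynomial functions on C (equivalent, C infinite). *)
Definition factors_as (f : {poly int}) (a : Cplx) : Prop :=
  forall z : Cplx,
    Ceval f z =
    Cmul (Cmul (Csub z a) (Csub z (Cconj a)))
         (Cmul (Csub z (Cinv a)) (Csub z (Cinv (Cconj a)))).

Definition good_poly (f : {poly int}) : Prop :=
  irreducible_over_Q f /\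
  exists (lambda theta : R),
    Rlt R1 lambda /\ Rlt R0 theta /\ Rlt theta (Rdiv R1 (IZR (Zpos 2))) /\ irrational theta /\
    factors_as f (Cmul (Cof lambda) (Cexp2pii theta)).

(* Main.v *)
Require Import Defs.
From Stdlib Require Import Reals ZArith Lra Lia.
Open Scope R_scope.

Lemma cos_2PI_Z (k : Z) : cos (2 * PI * IZR k) = 1.
Proof.
  assert (H : forall n : nat, cos (2 * PI * INR n) = 1).
  { intro n. replace (2 * PI * INR n) with (0 + 2 * INR n * PI) by ring.
    rewrite cos_period. apply cos_0. }
  destruct k as [|p|p].
  - rewrite Rmult_0_r; apply cos_0.
  - replace (IZR (Z.pos p)) with (INR (Pos.to_nat p)) by (rewrite INR_IZR_INZ, positive_nat_Z; reflexivity). apply H.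
  - replace (IZR (Z.neg p)) with (- INR (Pos.to_nat p)) by (rewrite INR_IZR_INZ, positive_nat_Z, <- opp_IZR; reflexivity).
    replace (2 * PI * - INR (Pos.to_nat p)) with (- (2 * PI * INR (Pos.to_nat p))) by ring.
    rewrite cos_neg. apply H.
Qed.

Definition nxt (S T : Z) (x y : Z * Z) : Z * Z :=
  (S * fst y + snd y - fst x, - T * fst y - snd x)%Z.
Fixpoint abp (S T : Z) (m : nat) : (Z * Z) * (Z * Z) :=
  match m with
  | O => ((0%Z, 2%Z), (1%Z, 0%Z))
  | Datatypes.S k => let p := abp S T k in (snd p, nxt S T (fst p) (snd p))
  end.

Lemma rec_red (S T : Z) (y : R) (w : nat -> R) :
  y * y = IZR S * y - IZR T -> w O = 2 -> w 1%nat = y ->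
  (forall k, w (Datatypes.S (Datatypes.S k)) = y * w (Datatypes.S k) - w k) ->
  forall m, w m = IZR (fst (fst (abp S T m))) * y + IZR (snd (fst (abp S T m)))
         /\ w (Datatypes.S m) = IZR (fst (snd (abp S T m))) * y + IZR (snd (snd (abp S T m))).
Proof.
  intros Hy H0 H1 Hr m. induction m as [|m [IH1 IH2]].
  - simpl. rewrite H0, H1. split; ring.
  - simpl. split; [exact IH2|]. rewrite Hr, IH1, IH2.
    destruct (abp S T m) as [[a0 b0] [a1 b1]]; simpl.
    unfold nxt; simpl. rewrite !minus_IZR, !plus_IZR, !mult_IZR, !opp_IZR.
    replace (y * (IZR a1 * y + IZR b1) - (IZR a0 * y + IZR b0)) with
      (IZR a1 * (y*y) + IZR b1 * y - IZR a0 * y - IZR b0) by ring.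
    rewrite Hy. ring.
Qed.

(* descent: n^2+4n is not a square *)
Lemma descentZ (n : Z) : (1 <= n)%Z -> forall (N : nat) (P Q : Z), (0 < Q)%Z ->
  (Z.to_nat Q <= N)%nat -> (P * P = (n * n + 4 * n) * Q * Q)%Z -> False.
Proof.
  intros Hn N. induction N as [|N IH]; intros P Q HQ HN HPQ.
  - lia.
  - assert (HP : exists P', (0 <= P')%Z /\ (P' * P' = (n * n + 4 * n) * Q * Q)%Z).
    { exists (Z.abs P). split; [lia|]. rewrite <- HPQ. destruct (Z.abs_spec P) as [[_ ->]|[_ ->]]; ring. }
    destruct HP as [P' [HP0 HP']]. clear P HPQ.
    assert (Hlo : ((n + 1) * Q < P')%Z) by nia.
    assert (Hhi : (P' < (n + 2) * Q)%Z) by nia.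
    apply (IH ((n*n+4*n) * Q - (n+1) * P') (P' - (n+1) * Q))%Z; [lia|lia|].
    assert (E : (((n * n + 4 * n) * Q - (n + 1) * P') * ((n * n + 4 * n) * Q - (n + 1) * P') -
       (n * n + 4 * n) * (P' - (n + 1) * Q) * (P' - (n + 1) * Q))%Z
      = (((n*n+4*n) - (n+1)*(n+1)) * ((n*n+4*n)*Q*Q - P'*P'))%Z) by ring.
    rewrite HP', Z.sub_diag, Z.mul_0_r in E. lia.
Qed.
Definition Eq4 (z : Cplx) (c0 c1 c2 c3 c4 : R) : Cplx :=
  Cadd (Cof c0) (Cmul z (Cadd (Cof c1) (Cmul z (Cadd (Cof c2) (Cmul z
   (Cadd (Cof c3) (Cmul z (Cadd (Cof c4) (Cmul z (Cof R0)))))))))).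
Definition Q2 (z : Cplx) (p r : R) : Cplx := Cadd (Cmul z z) (Cadd (Cmul (Cof p) z) (Cof r)).

Lemma L1 z a b : Cmul (Csub z (a,b)) (Csub z (Cconj (a,b))) = Q2 z (-2*a) (a*a+b*b).
Proof. destruct z; unfold Cmul, Csub, Cconj, Q2, Cadd, Cof; simpl; f_equal; ring. Qed.

Lemma L2 z p r p' r' : Cmul (Q2 z p r) (Q2 z p' r') = Eq4 z (r*r') (p*r'+p'*r) (r+r'+p*p') (p+p') 1.
Proof. destruct z; unfold Cmul, Eq4, Q2, Cadd, Cof; simpl; f_equal; ring. Qed.

Lemma Cinv_conj z : Cnorm2 z <> 0 -> Cinv (Cconj z) = Cconj (Cinv z).
Proof. intro H. destruct z; unfold Cinv, Cconj, Cnorm2 in *; simpl in *; f_equal; field; lra. Qed.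

Lemma factor_gen (lam co si : R) (z : Cplx) : 1 < lam -> co*co + si*si = 1 ->
  Cmul (Cmul (Csub z (Cmul (Cof lam) (co,si))) (Csub z (Cconj (Cmul (Cof lam) (co,si)))))
       (Cmul (Csub z (Cinv (Cmul (Cof lam) (co,si)))) (Csub z (Cinv (Cconj (Cmul (Cof lam) (co,si))))))
  = Eq4 z 1 (-2*co*(lam + /lam)) (lam*lam + /(lam*lam) + 4*co*co) (-2*co*(lam + /lam)) 1.
Proof.
  intros Hl Hc.
  assert (Ha : Cmul (Cof lam) (co,si) = (lam*co, lam*si)).
  { unfold Cmul, Cof; simpl; f_equal; ring. }
  rewrite Ha.
  assert (HN : Cnorm2 (lam*co, lam*si) = lam*lam).
  { unfold Cnorm2; simpl. transitivity (lam*lam*(co*co+si*si)); [ring| rewrite Hc; ring]. }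
  rewrite Cinv_conj by (rewrite HN; nra).
  assert (Hi : Cinv (lam*co, lam*si) = (co/lam, -si/lam)).
  { unfold Cinv; rewrite HN; simpl; f_equal; field; lra. }
  rewrite Hi, !L1, L2.
  assert (E1 : lam * co * (lam * co) + lam * si * (lam * si) = lam*lam).
  { transitivity (lam*lam*(co*co+si*si)); [ring| rewrite Hc; ring]. }
  assert (E2 : co / lam * (co / lam) + - si / lam * (- si / lam) = /(lam*lam)).
  { transitivity ((co*co+si*si)/(lam*lam)); [field; lra| rewrite Hc; field; lra]. }
  rewrite E1, E2. f_equal; field; lra.
Qed.

Lemma u_rec (phi : R) (k : nat) :
  2 * cos (2 * INR (Datatypes.S (Datatypes.S k)) * phi) =
  2 * cos (2 * INR 1 * phi) * (2 * cos (2 * INR (Datatypes.S k) * phi)) - 2 * cos (2 * INR k * phi).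
Proof.
  set (t := 2 * INR (Datatypes.S k) * phi).
  replace (2 * INR (Datatypes.S (Datatypes.S k)) * phi) with (t + 2*phi) by (unfold t; rewrite !S_INR; ring).
  replace (2 * INR k * phi) with (t - 2*phi) by (unfold t; rewrite !S_INR; ring).
  replace (2 * INR 1 * phi) with (2*phi) by (simpl; ring).
  rewrite cos_plus, cos_minus. ring.
Qed.

Lemma v_rec (X Y : R) (k : nat) : X * Y = 1 ->
  X ^ (Datatypes.S (Datatypes.S k)) + Y ^ (Datatypes.S (Datatypes.S k)) =
  (X + Y) * (X ^ (Datatypes.S k) + Y ^ (Datatypes.S k)) - (X ^ k + Y ^ k).
Proof.
  intro H. simpl.
  assert (E : (X + Y) * (X * X ^ k + Y * Y ^ k) - (X ^ k + Y ^ k) - (X * (X * X ^ k) + Y * (Y * Y ^ k))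
     = (X*Y - 1) * (X^k + Y^k)) by ring.
  rewrite H in E. lra.
Qed.

Lemma real_main (n : nat) : (3 <= n)%nat -> exists lam theta : R,
  1 < lam /\ 0 < theta /\ theta < 1/2 /\ irrational theta /\
  forall z, Cmul (Cmul (Csub z (Cmul (Cof lam) (Cexp2pii theta))) (Csub z (Cconj (Cmul (Cof lam) (Cexp2pii theta)))))
       (Cmul (Csub z (Cinv (Cmul (Cof lam) (Cexp2pii theta)))) (Csub z (Cinv (Cconj (Cmul (Cof lam) (Cexp2pii theta))))))
  = Eq4 z 1 1 (INR n) 1 1.
Proof.
  intro Hn3.
  set (nr := INR n).
  assert (Hnr : 3 <= nr) by (unfold nr; replace 3 with (INR 3) by (simpl; ring); apply le_INR; lia).
  set (D := nr*nr + 4*nr).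
  set (sD := sqrt D).
  assert (HsD0 : 0 <= sD) by apply sqrt_pos.
  assert (HsD : sD * sD = D) by (apply sqrt_sqrt; unfold D; nra).
  assert (HsD1 : nr + 1 < sD) by (unfold D in HsD; nra).
  set (z2 := (nr + 2 + sD)/2).
  set (z1 := (nr + 2 - sD)/2).
  assert (Hz12 : z1 * z2 = 1) by (unfold z1, z2, D in *; lra).
  assert (Hz2 : 4 < z2) by (unfold z2; lra).
  assert (Hz1 : z1 = / z2).
  { apply (Rmult_eq_reg_l z2); [rewrite Rinv_r by lra; rewrite Rmult_comm; exact Hz12 | lra]. }
  set (L := sqrt z2).
  assert (HL : L * L = z2) by (apply sqrt_sqrt; unfold z2; lra).
  assert (HL2 : 2 < L) by (pose proof (sqrt_pos z2); fold L in H; unfold z2 in HL; nra).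
  set (sq := sqrt (L*L - 4)).
  assert (Hsq0 : 0 <= sq) by apply sqrt_pos.
  assert (Hsq : sq * sq = L*L - 4) by (apply sqrt_sqrt; nra).
  set (lam := (L + sq)/2).
  assert (Hlam : 1 < lam) by (unfold lam; lra).
  assert (Hinv : /lam = (L - sq)/2).
  { apply (Rmult_eq_reg_l lam); [|lra]. rewrite Rinv_r by lra. unfold lam. lra. }
  assert (HLs : lam + /lam = L) by (rewrite Hinv; unfold lam; lra).
  set (co := - / (2 * L)).
  assert (Hco : -1 < co < 1).
  { unfold co. assert (0 < /(2*L) < 1).
    { split; [apply Rinv_0_lt_compat; lra|]. rewrite <- Rinv_1. apply Rinv_lt_contravar; lra. }
    lra. }
  set (phi := acos co).
  assert (Hphi : 0 < phi < PI) by (apply acos_bound_lt; exact Hco).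
  set (theta := phi / (2 * PI)).
  assert (HPI : 0 < PI) by apply PI_RGT_0.
  assert (Hth : 2 * PI * theta = phi) by (unfold theta; field; lra).
  assert (Hexp : Cexp2pii theta = (co, sin phi)).
  { unfold Cexp2pii. rewrite Hth. f_equal. unfold phi. apply cos_acos. lra. }
  assert (Hcos : cos phi = co) by (apply cos_acos; lra).
  exists lam, theta. split; [exact Hlam|]. split; [unfold theta; apply Rdiv_lt_0_compat; lra|].
  split; [unfold theta; apply (Rmult_lt_reg_r (2*PI)); [lra|]; unfold Rdiv; rewrite Rmult_assoc, Rinv_l by lra; lra|].
  split.
  -
    intros [p [q [Hq Hpq]]].
    set (u := fun k : nat => 2 * cos (2 * INR k * phi)).
    set (u1 := u 1%nat).
    set (X := lam * lam). set (Y := /lam * /lam).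
    assert (HXY : X * Y = 1) by (unfold X, Y; field; lra).
    assert (HX : 1 < X) by (unfold X; nra).
    set (v := fun k : nat => X ^ k + Y ^ k).
    assert (Hu1 : u1 = z1 - 2).
    { unfold u1, u. replace (2 * INR 1 * phi) with (2 * phi) by (simpl; ring).
      rewrite cos_2a_cos, Hcos. unfold co.
      rewrite Hz1.
      rewrite <- HL. field. lra. }
    assert (Hv1 : v 1%nat = z2 - 2).
    { unfold v. simpl. rewrite !Rmult_1_r. rewrite <- HL, <- HLs. unfold X, Y. field. lra. }
    set (S := (Z.of_nat n - 2)%Z). set (T := (1 - 2 * Z.of_nat n)%Z).
    assert (HS : IZR S = nr - 2) by (unfold S, nr; rewrite minus_IZR, <- INR_IZR_INZ; reflexivity).
    assert (HT : IZR T = 1 - 2 * nr) by (unfold T, nr; rewrite minus_IZR, mult_IZR, <- INR_IZR_INZ; reflexivity).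
    assert (Qu : u1 * u1 = IZR S * u1 - IZR T) by (rewrite Hu1, HS, HT; unfold z1, D in *; lra).
    assert (Qv : v 1%nat * v 1%nat = IZR S * v 1%nat - IZR T) by (rewrite Hv1, HS, HT; unfold z2, D in *; lra).
    assert (Ru := rec_red S T u1 u Qu ltac:(unfold u; simpl; rewrite Rmult_0_r, Rmult_0_l, cos_0; ring) eq_refl (u_rec phi)).
    assert (Rv := rec_red S T (v 1%nat) v Qv ltac:(unfold v; simpl; ring) eq_refl (fun k => ltac:(unfold v; rewrite v_rec by exact HXY; simpl; ring))).
    set (m := Z.to_nat (q * q)).
    assert (Hm : (1 <= m)%nat) by (unfold m; lia).
    assert (Hum : u m = 2).
    { unfold u. assert (INR m = IZR (q*q)) by (unfold m; rewrite INR_IZR_INZ, Z2Nat.id by nia; reflexivity).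
      rewrite H. replace (2 * IZR (q * q) * phi) with (2 * PI * IZR (2 * p * q)).
      - rewrite cos_2PI_Z. ring.
      - rewrite <- Hth, Hpq, !mult_IZR. field. apply not_0_IZR; exact Hq. }
    assert (Hvm : 2 < v m).
    { unfold v. assert (1 < X ^ m) by (apply Rlt_pow_R1; [lra|lia]).
      assert (X ^ m * Y ^ m = 1) by (rewrite <- Rpow_mult_distr, HXY; apply pow1).
      nra. }
    destruct (Ru m) as [Hu _]. destruct (Rv m) as [Hv _].
    destruct (abp S T m) as [[a b] rest]. simpl in Hu, Hv.
    destruct (Z.eq_dec a 0) as [Ha|Ha].
    + subst a. rewrite Hum in Hu. rewrite Rmult_0_l, Rplus_0_l in Hu, Hv. lra.
    + rewrite Hum, Hu1 in Hu.
      set (K := (a * (Z.of_nat n - 2) + 2 * b - 4)%Z).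
      assert (HK : IZR K = sD * IZR a).
      { unfold K. rewrite minus_IZR, plus_IZR, !mult_IZR. replace (IZR (Z.of_nat n - 2)) with (nr - 2) by (unfold nr; rewrite minus_IZR, INR_IZR_INZ; reflexivity). unfold z1 in Hu. lra. }
      assert (HK2 : (K * K = (Z.of_nat n * Z.of_nat n + 4 * Z.of_nat n) * Z.abs a * Z.abs a)%Z).
      { apply eq_IZR. rewrite !mult_IZR, plus_IZR, !mult_IZR, <- INR_IZR_INZ, HK. fold nr.
        assert (IZR (Z.abs a) * IZR (Z.abs a) = IZR a * IZR a) by
          (rewrite <- !mult_IZR; f_equal; destruct (Z.abs_spec a) as [[_ ->]|[_ ->]]; ring).
        transitivity (sD * sD * (IZR a * IZR a)); [ring|]. rewrite HsD, <- H. unfold D. ring. }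
      apply (descentZ (Z.of_nat n) ltac:(lia) (Z.to_nat (Z.abs a)) K (Z.abs a)); [lia|lia|exact HK2].
  - intro z. rewrite Hexp.
    assert (Hc2 : co*co + sin phi * sin phi = 1) by (pose proof (sin2_cos2 phi); rewrite Hcos in H; unfold Rsqr in H; lra).
    rewrite (factor_gen lam co (sin phi) z Hlam Hc2).
    assert (E1 : -2 * co * (lam + /lam) = 1) by (rewrite HLs; unfold co; field; lra).
    assert (E2 : lam * lam + / (lam * lam) + 4 * co * co = INR n).
    { replace (lam * lam + / (lam * lam)) with ((lam + /lam)*(lam + /lam) - 2) by (field; lra).
      rewrite HLs, HL. unfold co. replace (4 * - / (2 * L) * - / (2 * L)) with (/ (L*L)) by (field; lra).
      rewrite HL. rewrite <- Hz1.
      unfold z1, z2. fold nr. lra. }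
    rewrite E1, E2. reflexivity.
Qed.
Close Scope R_scope.
From HB Require Import structures.
From mathcomp Require Import all_boot all_order all_algebra.
From mathcomp Require Import ring lra zify.
Set Implicit Arguments. Unset Strict Implicit. Unset Printing Implicit Defensive.
Import Order.TTheory GRing.Theory Num.Theory.
Local Open Scope ring_scope.
Definition fpoly (n : nat) : {poly int} := Poly [:: 1; 1; n%:Z; 1; 1].
Definition Fq (n : nat) : {poly rat} := map_poly (intr : int -> rat) (fpoly n).

Lemma fpolyE n : polyseq (fpoly n) = [:: 1; 1; n%:Z; 1; 1].
Proof. by rewrite /fpoly (PolyK (c:=0)) ?oner_neq0. Qed.

Lemma FqE n : Fq n = Poly [:: 1; 1; n%:R; 1; 1].
Proof. by rewrite /Fq map_polyE fpolyE /= !rmorph1 -[n%:R]/(n%:Z%:~R). Qed.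

Lemma Fq_horner n x : (Fq n).[x] = x^+4 + x^+3 + n%:R * x^+2 + x + 1.
Proof. rewrite FqE horner_Poly /=. ring. Qed.

Lemma Fq_pos n x : (3 <= n)%N -> 0 < (Fq n).[x].
Proof.
  move=> Hn; rewrite Fq_horner.
  have H3 : (3 : rat) <= n%:R by rewrite (ler_nat _ 3 n).
  have h1 : 0 <= (x^+2 + x/2)^+2 by apply: sqr_ge0.
  have h2 : 0 <= (x + 2/11)^+2 by apply: sqr_ge0.
  have h3 : 0 <= (n%:R - 3) * x^+2 by apply: mulr_ge0; [lra | apply: sqr_ge0].
  have -> : x^+4 + x^+3 + n%:R * x^+2 + x + 1 =
     (x^+2 + x/2)^+2 + (n%:R - 3) * x^+2 + 11/4 * (x + 2/11)^+2 + 10/11 by field.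
  lra.
Qed.

Lemma size_Fq n : size (Fq n) = 5%N.
Proof. by rewrite FqE (PolyK (c:=0)) ?oner_neq0. Qed.

Lemma coef_Fq n i : (Fq n)`_i = [:: 1; 1; n%:R; 1; 1]`_i.
Proof. by rewrite FqE coef_Poly. Qed.

Lemma descent_int (n : int) : 1 <= n -> forall (N : nat) (P Q : int), 0 < Q ->
  (absz Q <= N)%N -> P * P = (n * n + 4 * n) * Q * Q -> False.
Proof.
  move=> Hn N; elim: N => [|N IH] P Q HQ HN HPQ; first by lia.
  have [P' [HP0 HP']] : exists P', 0 <= P' /\ P' * P' = (n * n + 4 * n) * Q * Q.
    exists `|P|; split; first by lia. rewrite -HPQ; nia.
  have Hlo : (n + 1) * Q < P' by nia.
  have Hhi : P' < (n + 2) * Q by nia.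
  apply: (IH ((n*n+4*n) * Q - (n+1) * P') (P' - (n+1) * Q)); [lia|lia|].
  have E : ((n * n + 4 * n) * Q - (n + 1) * P') * ((n * n + 4 * n) * Q - (n + 1) * P') -
       (n * n + 4 * n) * (P' - (n + 1) * Q) * (P' - (n + 1) * Q)
      = ((n*n+4*n) - (n+1)*(n+1)) * ((n*n+4*n)*Q*Q - P'*P') by ring.
  rewrite HP' subrr mulr0 in E. lia.
Qed.

Lemma no_rat_sq (n : nat) (z : rat) : (1 <= n)%N -> z * z != (n * n + 4 * n)%:R.
Proof.
  move=> Hn; apply/negP => /eqP Hz.
  have Hd : 0 < denq z by apply: denq_gt0.
  have E : (numq z * numq z)%:~R = ((n%:Z * n%:Z + 4 * n%:Z) * denq z * denq z)%:~R :> rat.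
    rewrite !intrM numqE.
    have -> : z * (denq z)%:~R * (z * (denq z)%:~R) = (z * z) * ((denq z)%:~R * (denq z)%:~R) by ring.
    rewrite Hz intrD !intrM natrD !natrM. ring.
  move/intr_inj: E => E.
  apply: (descent_int (n := n%:Z) _ (N := absz (denq z)) Hd (leqnn _) E). lia.
Qed.

Lemma no_lin n (r : {poly rat}) : (3 <= n)%N -> size r = 2%N -> r %| Fq n -> False.
Proof.
  move=> Hn Hr Hd. have [x Hx] := poly2_root Hr.
  have := Fq_pos x Hn. rewrite -(divpK Hd) hornerM (rootP Hx) mulr0. by rewrite ltxx.
Qed.

Lemma coef3 (p : {poly rat}) j : (size p <= 3)%N -> (3 <= j)%N -> p`_j = 0.
Proof. move=> Hp Hj; apply: nth_default; exact: leq_trans Hp Hj. Qed.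

Lemma quad_abs (n : nat) (s t P R : rat) : (3 <= n)%N -> s * t = 1 -> P + R = 1 ->
  s + t + P * R = n%:R -> P * t + R * s = 1 -> False.
Proof.
  move=> Hn Hst HPR Hn2 HPt.
  have H3 : (3 : rat) <= n%:R by rewrite (ler_nat _ 3 n).
  have RE : R = 1 - P by lra.
  rewrite RE in Hn2 HPt.
  have [Est|Nst] := eqVneq s t.
  - rewrite -Est in Hst HPt Hn2.
    have Hs : s = 1 by rewrite -HPt; ring.
    rewrite Hs in Hn2.
    have := sqr_ge0 (2 * P - 1). nra.
  - set w := s + t.
    have HP : P * (t - s) = 1 - s by lra.
    have nw : n%:R - w = P * (1 - P) by rewrite /w; lra.
    have B : (1 - P) * (t - s) = t - 1 by lra.
    have C : (t - s) * (t - s) = (w - 2) * (w + 2) by rewrite /w; lra.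
    have D : (n%:R - w) * ((w - 2) * (w + 2)) = w - 2.
      rewrite -C nw.
      transitivity ((P * (t - s)) * ((1 - P) * (t - s))); first by ring.
      rewrite HP B /w. lra.
    have : (w - 2) * ((n%:R - w) * (w + 2) - 1) = 0 by lra.
    move/eqP; rewrite mulf_eq0 => /orP [/eqP Hw2 | /eqP Hw].
    + have Ht : t = 2 - s by rewrite /w in Hw2; lra.
      have : (s - t) * (s - t) = 0 by rewrite Ht; rewrite Ht in Hst; lra.
      move/eqP; rewrite mulf_eq0 orbb subr_eq0 => Est. by rewrite Est in Nst.
    + have Hn1 : (1 <= n)%N by apply: leq_trans Hn.
      have := no_rat_sq (2 * w + 2 - n%:R) Hn1.
      rewrite natrD !natrM. move/eqP; apply. lra.
Qed.

Lemma no_quad n (p q : {poly rat}) : (3 <= n)%N -> (size p <= 3)%N -> (size q <= 3)%N ->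
  Fq n = p * q -> False.
Proof.
  move=> Hn Hp Hq HF.
  have C i : (Fq n)`_i = (p * q)`_i by rewrite HF.
  have E0 := C 0%N. have E1 := C 1%N. have E2 := C 2%N. have E3 := C 3%N. have E4 := C 4%N.
  rewrite !coef_Fq !coefM /= in E0 E1 E2 E3 E4.
  rewrite !big_ord_recr !big_ord0 /= ?subSS ?subn0 ?sub0n ?add0r in E0 E1 E2 E3 E4.
  have P3 : p`_3 = 0 by apply: coef3. have P4 : p`_4 = 0 by apply: coef3.
  have Q3 : q`_3 = 0 by apply: coef3. have Q4 : q`_4 = 0 by apply: coef3.
  rewrite P3 P4 Q3 Q4 ?mul0r ?mulr0 ?addr0 ?add0r in E3 E4.
  clear C HF P3 P4 Q3 Q4.
  move: (p`_0) (p`_1) (p`_2) (q`_0) (q`_1) (q`_2) E0 E1 E2 E3 E4 => p0 p1 p2 q0 q1 q2 E0 E1 E2 E3 E4.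
  have p2n : p2 != 0 by apply/eqP => h; rewrite h mul0r in E4; move/eqP: E4; rewrite oner_eq0.
  have p0n : p0 != 0 by apply/eqP => h; rewrite h mul0r in E0; move/eqP: E0; rewrite oner_eq0.
  have q2E : q2 = p2^-1 by apply: (mulfI p2n); rewrite -E4 mulfV.
  have q0E : q0 = p0^-1 by apply: (mulfI p0n); rewrite -E0 mulfV.
  rewrite q2E q0E in E1 E2 E3.
  apply: (quad_abs (s := p2 / p0) (t := p0 / p2) (P := q1 * p2) (R := p1 / p2) Hn).
  - by field; apply/andP.
  - rewrite [RHS]E3; ring.
  - rewrite E2. field. by apply/andP.
  - rewrite [RHS]E1. field. by apply/andP.
Qed.

Lemma Fq_irr n : (3 <= n)%N -> irreducible_poly (Fq n).
Proof.
  move=> Hn. split; first by rewrite size_Fq.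
  move=> q Hq1 Hd.
  have F0 : Fq n != 0 by rewrite -size_poly_eq0 size_Fq.
  have Hs : (size q <= 5)%N by rewrite -(size_Fq n); apply: dvdp_leq.
  have q0 : q != 0 by apply/eqP => h; move: Hd; rewrite h dvd0p (negbTE F0).
  have HF := divpK Hd.
  have d0 : Fq n %/ q != 0 by apply/eqP => h; move: HF; rewrite h mul0r => /eqP; rewrite eq_sym (negbTE F0).
  have Hsz : (size (Fq n %/ q) + size q).-1 = 5%N by rewrite -size_mul // HF size_Fq.
  have Hq0 : size q != 0%N by rewrite size_poly_eq0.
  have Hd0 : size (Fq n %/ q) != 0%N by rewrite size_poly_eq0.
  have dd : Fq n %/ q %| Fq n by rewrite -{2}HF dvdp_mulr.
  move: Hs Hq1 Hq0 Hsz; case Esz: (size q) => [|[|[|[|[|[|k]]]]]] //= _ _ _ Hsz; rewrite ?addnS /= in Hsz.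
  - exfalso; exact: no_lin Hn Esz Hd.
  - exfalso; apply: (no_quad (p := Fq n %/ q) (q := q) Hn); [by move: Hsz; rewrite addn0 => -[->] | by rewrite Esz | by rewrite HF].
  - exfalso; apply: (no_lin (r := Fq n %/ q) Hn _ dd); by move: Hsz; rewrite addn0 => -[->].
  - by rewrite -dvdp_size_eqp // size_Fq Esz.
Qed.

Theorem lemma2p3 :
  forall s : seq {poly int}, exists f : {poly int}, f \notin s /\ good_poly f.
Proof.
  move=> s.
  have HM0 : forall (t : seq {poly int}) p, p \in t ->
      (absz (p`_2)%R <= foldr (fun (p : {poly int}) acc => (absz (p`_2)%R + acc)%N) 0%N t)%N.
    elim => [|a t IH] p //=; rewrite inE => /orP [/eqP ->|Hp].
    - exact: leq_addr.
    - exact: leq_trans (IH _ Hp) (leq_addl _ _).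
  pose M := foldr (fun (p : {poly int}) acc => (absz (p`_2)%R + acc)%N) 0%N s.
  have HM : forall p, p \in s -> (absz (p`_2)%R <= M)%N by move=> p; apply: HM0.
  exists (fpoly (M + 3)). split.
  - apply/negP => Hin. have := HM _ Hin. rewrite /fpoly coef_Poly /=. lia.
  - split; first by apply: Fq_irr; lia.
    have [lam [theta [H1 [H2 [H3 [H4 H5]]]]]] := real_main (M + 3) ltac:(lia).
    exists lam, theta. split; [exact H1|]. split; [exact H2|]. split; [exact H3|]. split; [exact H4|].
    move=> z. rewrite H5 /Ceval fpolyE. rewrite /= /Eq4. reflexivity.
Qed.
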